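(* Suppose $X$ has well-defined scattered $\Pi_1$-products. Let $A$ be a homotopy cut-set for paths $\alpha,\beta:[0,1]\to X$ such that $\alpha|_{[a,b]}\simeq\beta|_{[a,b]}$ for all $a,b\in A\cap(0,1)$ with $a<b$. Then $\alpha\simeq\beta$.
   Context: $\simeq$ is path-homotopy. For paths $\alpha,\beta:[s,t]\to X$, a set $A\subseteq[s,t]$ is a homotopy cut-set for $\alpha,\beta$ if $A$ is closed, nowhere dense, contains $\{s,t\}$, $\alpha|_A=\beta|_A$, and $\alpha|_{[a,b]}\simeq\beta|_{[a,b]}$ for every component $(a,b)$ of $[s,t]\setminus A$. $X$ has well-defined scattered $\Pi_1$-products if any two paths $[0,1]\to X$ that admit a scattered homotopy cut-set (one in which every non-empty subset has an isolated point) are path-homotopic. *)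

(* Defs.v *)
From Stdlib Require Import Reals.
Open Scope R_scope.

Record TopSpace := {
  pt :> Type;
  is_open : (pt -> Prop) -> Prop;
  open_full : is_open (fun _ => True);
  open_empty : is_open (fun _ => False);
  open_inter : forall U V, is_open U -> is_open V -> is_open (fun x => U x /\ V x);
  open_union : forall (I : Type) (F : I -> pt -> Prop),
      (forall i, is_open (F i)) -> is_open (fun x => exists i, F i x)
}.

Definition cont_on {X : TopSpace} (s t : R) (f : R -> X) : Prop :=
  forall U, is_open X U ->
  forall x, s <= x <= t -> U (f x) ->
  exists d, 0 < d /\ forall y, s <= y <= t -> Rabs (y - x) < d -> U (f y).

(* A path [s,t] -> X (values outside [s,t] are irrelevant). *)
Definition is_path {X : TopSpace} (s t : R) (f : R -> X) : Prop := cont_on s t f.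

Definition cont_on2 {X : TopSpace} (s t : R) (H : R -> R -> X) : Prop :=
  forall U, is_open X U ->
  forall x u, s <= x <= t -> 0 <= u <= 1 -> U (H x u) ->
  exists d, 0 < d /\ forall y v, s <= y <= t -> 0 <= v <= 1 ->
     Rabs (y - x) < d -> Rabs (v - u) < d -> U (H y v).

Definition path_homotopic {X : TopSpace} (s t : R) (alpha beta : R -> X) : Prop :=
  exists H : R -> R -> X,
    cont_on2 s t H /\
    (forall x, s <= x <= t -> H x 0 = alpha x) /\
    (forall x, s <= x <= t -> H x 1 = beta x) /\
    (forall u, 0 <= u <= 1 -> H s u = alpha s /\ H t u = alpha t).

Definition closure_R (A : R -> Prop) (x : R) : Prop :=
  forall e, 0 < e -> exists a, A a /\ Rabs (a - x) < e.
Definition closed_R (A : R -> Prop) : Prop :=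
  forall x, closure_R A x -> A x.

Definition nowhere_dense (A : R -> Prop) : Prop :=
  forall c d, c < d -> exists x, c < x < d /\ ~ closure_R A x.

Definition scattered (A : R -> Prop) : Prop :=
  forall B : R -> Prop, (forall x, B x -> A x) -> (exists b, B b) ->
  exists b, B b /\ exists e, 0 < e /\ forall c, B c -> Rabs (c - b) < e -> c = b.

(* Homotopy cut-set for alpha, beta : [s,t] -> X.  The components of
   [s,t] \ A (A closed, containing s and t) are exactly the open intervals
   (a,b) with a < b, a, b in A and (a,b) disjoint from A. *)
Definition homotopy_cut_set {X : TopSpace} (s t : R) (alpha beta : R -> X)
    (A : R -> Prop) : Prop :=
  (forall x, A x -> s <= x <= t) /\
  closed_R A /\
  nowhere_dense A /\
  A s /\ A t /\
  (forall x, A x -> alpha x = beta x) /\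
  (forall a b, A a -> A b -> a < b -> (forall x, a < x < b -> ~ A x) ->
     path_homotopic a b alpha beta).

Definition scattered_Pi1_products (X : TopSpace) : Prop :=
  forall alpha beta : R -> X, is_path 0 1 alpha -> is_path 0 1 beta ->
  (exists A, homotopy_cut_set 0 1 alpha beta A /\ scattered A) ->
  path_homotopic 0 1 alpha beta.

(* Main.v *)
Require Import Defs.
From Stdlib Require Import Reals Lra Lia Classical ClassicalEpsilon.
Open Scope R_scope.

Ltac rabs := unfold Rabs in *; repeat match goal with
  | H : context [Rcase_abs ?t] |- _ => destruct (Rcase_abs t)
  | |- context [Rcase_abs ?t] => destruct (Rcase_abs t) end; try lra.

Lemma iso_of_amo (F : R -> Prop) x e : 0 < e ->
  (forall y z, F y -> F z -> Rabs (y - x) < e -> Rabs (z - x) < e -> y = z) ->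
  exists e', 0 < e' /\ forall y, F y -> Rabs (y - x) < e' -> y = x.
Proof.
  intros he H.
  destruct (classic (exists y, F y /\ Rabs (y - x) < e /\ y <> x)) as [[y [Fy [hy ny]]]|hn].
  - exists (Rabs (y - x)). split.
    + apply Rabs_pos_lt. lra.
    + intros z Fz hz. exfalso.
      assert (z = y) by (apply H; auto; lra). subst. lra.
  - exists e. split; auto. intros z Fz hz. apply NNPP; intro; apply hn; eauto.
Qed.

Fixpoint seqm (m : R -> R) (r0 : R) (k : nat) : R :=
  match k with O => m r0 | S k => m (seqm m r0 k / 2) end.

Lemma family (A : R -> Prop) (hc : closed_R A) (hb : forall x, A x -> 0 <= x <= 1) :
 exists F : R -> Prop,
  (forall x, F x -> A x /\ 0 < x < 1) /\
  (forall q, 0 < q <= 1 -> (forall x, 0 < x < q -> ~ F x) -> forall x, 0 < x < q -> ~ A x) /\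
  (forall x, 0 < x -> exists e, 0 < e /\ forall y, F y -> Rabs (y - x) < e -> y = x).
Proof.
  destruct (classic (forall t, 0 < t -> exists a, A a /\ 0 < a < t)) as [HPL|HPL].
  - set (m := fun t => epsilon (inhabits 0) (fun a => A a /\ 0 < a < t)).
    assert (hm : forall t, 0 < t -> A (m t) /\ 0 < m t < t).
    { intros t ht. unfold m. apply epsilon_spec. apply HPL; auto. }
    clearbody m.
    set (a := seqm m (1/2)).
    assert (hpos : forall k, A (a k) /\ 0 < a k).
    { induction k.
      - unfold a; simpl. destruct (hm (1/2) ltac:(lra)); split; [auto|lra].
      - unfold a; simpl. fold a. destruct IHk. destruct (hm (a k / 2) ltac:(lra)); split; [auto|lra]. }
    assert (hstep : forall k, a (S k) < a k / 2).
    { intro k. unfold a at 1; simpl. fold a. destruct (hpos k).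
      destruct (hm (a k / 2) ltac:(lra)); lra. }
    assert (h0 : a O < 1/2).
    { unfold a; simpl. destruct (hm (1/2) ltac:(lra)); lra. }
    assert (hpow : forall k, a k < (1/2)^k).
    { induction k. simpl. lra. simpl. specialize (hstep k). lra. }
    assert (hdec : forall i j, (i < j)%nat -> a j < a i / 2).
    { intros i j; induction j; intros hij. lia.
      destruct (Nat.eq_dec i j). subst; auto.
      assert (a j < a i / 2) by (apply IHj; lia).
      specialize (hstep j). destruct (hpos j). lra. }
    exists (fun x => exists k, x = a k). split; [|split].
    + intros x [k ->]. destruct (hpos k). split; auto. split; auto.
      destruct k. lra. specialize (hdec 0%nat (S k) ltac:(lia)). destruct (hpos 0%nat). lra.
    + intros q hq hF x hx Ax.
      destruct (pow_lt_1_zero (1/2) ltac:(rabs) q ltac:(lra)) as [N HN].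
      specialize (HN N (le_n _)). specialize (hpow N).
      pose proof (Rle_abs ((1/2)^N)). destruct (hpos N).
      apply (hF (a N)). lra. eauto.
    + intros x hx. apply (iso_of_amo _ x (x/4)). lra.
      intros y z [i ->] [j ->] hy hz.
      destruct (Nat.lt_total i j) as [l|[e|l]].
      * specialize (hdec i j l). destruct (hpos i), (hpos j). rabs.
      * subst; auto.
      * specialize (hdec j i l). destruct (hpos i), (hpos j). rabs.
  - apply not_all_ex_not in HPL. destruct HPL as [t0 Ht0].
    apply imply_to_and in Ht0. destruct Ht0 as [ht0 hne].
    exists (fun x => A x /\ 0 < x < 1 /\ forall b, A b -> 0 < b < 1 -> x <= b).
    split; [|split].
    + intros x [? [? ?]]; auto.
    + intros q hq hF x hx Ax.
      set (E := fun y => forall b, A b -> 0 < b < 1 -> y <= b).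
      assert (hbd : bound E). { exists x. intros y hy. apply hy; auto; lra. }
      assert (hE : E t0).
      { intros b Ab hb'. apply Rnot_lt_le. intro. apply hne. exists b; split; auto; lra. }
      destruct (completeness E hbd (ex_intro _ t0 hE)) as [L [hL1 hL2]].
      assert (Lt0 : t0 <= L) by (apply hL1; auto).
      assert (Lx : L <= x) by (apply hL2; intros y hy; apply hy; auto; lra).
      assert (Llb : forall b, A b -> 0 < b < 1 -> L <= b).
      { intros b Ab hb'. apply hL2. intros y hy. apply hy; auto. }
      assert (AL : A L).
      { apply hc. intros e he.
        destruct (classic (exists b, A b /\ 0 < b < 1 /\ b < L + e)) as [[b [Ab [hb1 hb2]]]|hn].
        - exists b. split; auto. specialize (Llb b Ab hb1). rabs.
        - exfalso. assert (E (L + e)).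
          { intros b Ab hb'. apply Rnot_lt_le. intro. apply hn. exists b; auto. }
          specialize (hL1 _ H). lra. }
      apply (hF L). lra. split; auto. split; auto. lra.
    + intros x hx. apply (iso_of_amo _ x 1). lra.
      intros y z [Ay [hy1 hy2]] [Az [hz1 hz2]] _ _.
      specialize (hy2 z Az hz1). specialize (hz2 y Ay hy1). lra.
Qed.

Theorem mainTheorem13 (X : TopSpace) (hX : scattered_Pi1_products X)
  (alpha beta : R -> X) (A : R -> Prop)
  (halpha : is_path 0 1 alpha) (hbeta : is_path 0 1 beta)
  (hA : homotopy_cut_set 0 1 alpha beta A)
  (hint : forall a b, A a -> A b -> 0 < a < 1 -> 0 < b < 1 -> a < b ->
            path_homotopic a b alpha beta) :
  path_homotopic 0 1 alpha beta.
Proof.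
  destruct hA as (hsub & hcl & hnd & h0 & h1 & heq & hcomp).
  destruct (family A hcl hsub) as (F & hF1 & hF2 & hF3).
  assert (hcl' : closed_R (fun x => A (1 - x))).
  { intros x hx. apply hcl. intros e he. destruct (hx e he) as [a [Aa ha]].
    exists (1 - a). split; auto. rabs. }
  assert (hsub' : forall x, A (1 - x) -> 0 <= x <= 1).
  { intros x hx. specialize (hsub _ hx). lra. }
  destruct (family _ hcl' hsub') as (F' & hG1 & hG2 & hG3).
  set (B := fun x => x = 0 \/ x = 1 \/ F x \/ F' (1 - x)).
  assert (hBA : forall x, B x -> A x).
  { intros x [->|[->|[Fx|Gx]]]; auto. apply hF1; auto.
    destruct (hG1 _ Gx). replace x with (1 - (1 - x)) by ring. auto. }
  assert (hB01 : forall x, B x -> 0 <= x <= 1) by (intros; apply hsub, hBA; auto).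
  assert (hiso : forall x, 0 < x < 1 -> exists e, 0 < e /\ forall y, B y -> Rabs (y - x) < e -> y = x).
  { intros x hx. destruct (hF3 x ltac:(lra)) as [e1 [he1 H1]].
    destruct (hG3 (1 - x) ltac:(lra)) as [e2 [he2 H2]].
    set (e := Rmin (Rmin e1 e2) (Rmin x (1 - x))).
    assert (ha : e <= e1) by (unfold e; eapply Rle_trans; apply Rmin_l).
    assert (hb : e <= e2) by (unfold e; eapply Rle_trans; [apply Rmin_l|apply Rmin_r]).
    assert (hc : e <= x) by (unfold e; eapply Rle_trans; [apply Rmin_r|apply Rmin_l]).
    assert (hd : e <= 1 - x) by (unfold e; eapply Rle_trans; [apply Rmin_r|apply Rmin_r]).
    assert (hpos : 0 < e) by (unfold e; repeat apply Rmin_glb_lt; lra).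
    exists e. split; auto. intros y [->|[->|[Fy|Gy]]] hy.
    - rabs.
    - rabs.
    - apply H1; auto; lra.
    - assert (1 - y = 1 - x) by (apply H2; auto; rabs). lra. }
  apply hX; auto. exists B. split.
  - unfold homotopy_cut_set. split; [|split; [|split; [|split; [|split; [|split]]]]].
    + auto.
    + intros x hx.
      assert (0 <= x <= 1).
      { split; apply Rnot_lt_le; intro.
        - destruct (hx (- x) ltac:(lra)) as [a [Ba ha]]. specialize (hB01 _ Ba). rabs.
        - destruct (hx (x - 1) ltac:(lra)) as [a [Ba ha]]. specialize (hB01 _ Ba). rabs. }
      destruct (Req_dec x 0). left; auto. destruct (Req_dec x 1). right; left; auto.
      destruct (hiso x ltac:(lra)) as [e [he H']].
      destruct (hx e he) as [y [By hy]]. rewrite <- (H' y By hy). auto.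
    + intros c d hcd. destruct (hnd c d hcd) as [x [hx hn]]. exists x. split; auto.
      intro hc'. apply hn. intros e he. destruct (hc' e he) as [a [Ba ha]]. exists a; auto.
    + left; auto.
    + right; left; auto.
    + intros x Bx. apply heq, hBA; auto.
    + intros p q Bp Bq hpq hfree.
      pose proof (hB01 _ Bp). pose proof (hB01 _ Bq).
      destruct (Req_dec p 0) as [->|hp].
      { apply hcomp; auto. intros x hx Ax.
        apply (hF2 q ltac:(lra)) with x; auto.
        intros z hz Fz. apply (hfree z hz). right; right; left; auto. }
      destruct (Req_dec q 1) as [->|hq].
      { apply hcomp; auto. intros x hx Ax.
        apply (hG2 (1 - p) ltac:(lra)) with (1 - x). 
        - intros z hz Fz. apply (hfree (1 - z)). lra. right; right; right.
          replace (1 - (1 - z)) with z by ring. auto.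
        - lra.
        - replace (1 - (1 - x)) with x by ring. auto. }
      apply hint; auto; lra.
  - intros C hC [b Cb].
    destruct (classic (exists c, C c /\ 0 < c < 1)) as [[c [Cc hc]]|hn].
    + exists c. split; auto. destruct (hiso c hc) as [e [he H']].
      exists e. split; [auto|]. intros z Cz hz. apply H'; auto.
    + exists b. split; auto. exists (1/2). split. lra.
      assert (h01 : forall z, C z -> z = 0 \/ z = 1).
      { intros z Cz. pose proof (hB01 _ (hC _ Cz)).
        destruct (Req_dec z 0); auto. destruct (Req_dec z 1); auto.
        exfalso. apply hn. exists z. split; auto. lra. }
      intros z Cz hz. destruct (h01 _ Cz) as [->| ->]; destruct (h01 _ Cb) as [->| ->]; rabs.
Qed.
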